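(* Let $G$ be an innately transitive permutation group on a finite set $\Omega$ and let $M$ be a plinth of $G$. If $\{\Gamma_1,\ldots,\Gamma_\ell\}$ is a $G$-invariant Cartesian decomposition of $\Omega$, then each $\Gamma_i$ ($1\le i\le \ell$) is an $M$-invariant partition of $\Omega$, that is, every element of $M$ maps each part of $\Gamma_i$ onto a part of $\Gamma_i$.
   Context: A Cartesian decomposition of a finite set $\Omega$ is a set $\mathcal E=\{\Gamma_1,\ldots,\Gamma_\ell\}$ of partitions of $\Omega$ such that $|\gamma_1\cap\cdots\cap\gamma_\ell|=1$ for all $\gamma_1\in\Gamma_1,\ldots,\gamma_\ell\in\Gamma_\ell$. For $g\in\mathrm{Sym}(\Omega)$, $\mathcal E$ is $g$-invariant if $g$ permutes the partitions in $\mathcal E$ (i.e. for each $i$ the image of $\Gamma_i$ under $g$ is some $\Gamma_j$); $\mathcal E$ is $G$-invariant if it is $g$-invariant for all $g\in G$. A finite permutation group is innately transitive if it has at least one transitive minimal normal subgroup; such a transitive minimal normal subgroup is called a plinth. *)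

(* Defs.v *)
From mathcomp Require Import all_boot all_order all_fingroup all_solvable.
Set Implicit Arguments. Unset Strict Implicit. Unset Printing Implicit Defensive.
Local Open Scope group_scope.

Section Defs.
Variable T : finType.

Definition is_partition (P : {set {set T}}) : Prop := partition P [set: T].

Definition cartesian_decomposition (E : {set {set {set T}}}) : Prop :=
  (forall P, P \in E -> is_partition P) /\
  (forall f : {set {set T}} -> {set T},
      (forall P, P \in E -> f P \in P) ->
      #|\bigcap_(P in E) f P| = 1%N).

Definition part_image (g : {perm T}) (P : {set {set T}}) : {set {set T}} :=
  (fun B : {set T} => g @: B) @: P.

Definition g_invariant_cd (g : {perm T}) (E : {set {set {set T}}}) : Prop :=
  forall P, P \in E -> part_image g P \in E.

Definition G_invariant_cd (G : {set {perm T}}) (E : {set {set {set T}}}) : Prop :=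
  forall g, g \in G -> g_invariant_cd g E.

Definition M_invariant_partition (M : {set {perm T}}) (P : {set {set T}}) : Prop :=
  forall m, m \in M -> forall B, B \in P -> m @: B \in P.

Definition minimal_normal (M G : {group {perm T}}) : Prop :=
  M <| G /\ minnormal M G.

Definition plinth (M G : {group {perm T}}) : Prop :=
  minimal_normal M G /\ [transitive M, on [set: T] | 'P].

Definition innately_transitive (G : {group {perm T}}) : Prop :=
  exists M : {group {perm T}}, plinth M G.
End Defs.

(* Main.v *)
Require Import Defs.
From mathcomp Require Import all_boot all_order all_fingroup all_solvable.
From mathcomp Require Import zify.

Lemma sum_half u n : 0 < u -> \sum_(1 <= k < n.+1) u %/ 2 ^ k + maxn (u %/ 2^n) 1 <= u.
Proof.
move=> u0; elim: n => [|n IH]; first by rewrite big_geq // add0n expn0 divn1; lia.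
rewrite big_nat_recr //= expnSr divnMA.
move: IH; set a := u %/ 2 ^ n; set s := \sum_(_ <= _ < _) _. lia.
Qed.

Lemma fact_bound p u : prime p -> 0 < u -> ~~ (p ^ u %| u`!).
Proof.
move=> pp u0; rewrite pfactor_dvdn ?fact_gt0 // -ltnNge logn_fact //.
apply: leq_trans (sum_half u u u0).
rewrite -addn1 leq_add ?leq_maxr //.
apply: leq_sum => k _; apply: leq_div2l; first by rewrite expn_gt0.
case: k => [|k]; first by [].
by rewrite leq_exp2r // prime_gt1.
Qed.

Lemma foldr_const k (s : seq nat) : all (pred1 k) s -> foldr muln 1 s = k ^ size s.
Proof. by elim: s => //= a s IH /andP[/eqP -> /IH ->]; rewrite expnS. Qed.

Lemma pblock_act (T : finType) (Q : {set {set T}}) (g : {perm T}) y :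
  partition Q setT -> partition ((('P^*)^*)%act Q g) setT ->
  pblock ((('P^*)^*)%act Q g) (g y) = ('P^*)%act (pblock Q y) g.
Proof.
move=> /and3P[/eqP cQ tQ _] /and3P[_ tQg _].
apply: def_pblock tQg _ _.
  by apply: (mem_setact ('P^*)); apply: pblock_mem; rewrite cQ inE.
by apply: (mem_setact 'P); rewrite mem_pblock cQ inE.
Qed.

Local Open Scope group_scope.
Theorem proposition3p1 (T : finType) (G M : {group {perm T}})
  (E : {set {set {set T}}}) :
  innately_transitive G -> plinth M G ->
  cartesian_decomposition E -> G_invariant_cd G E ->
  forall P, P \in E -> M_invariant_partition M P.
Proof.
move=> _ [[nMG minM] trM] [partE cartE] Ginv P PE m Mm B BP.
pose to := ((('P^*)^*)%act : {action {perm T} &-> {set {set T}}}).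
have sMG := normal_sub nMG.
have toE g Q : Q \in E -> g \in G -> to Q g \in E.
  by move=> QE Gg; exact: (Ginv g Gg Q QE).
have [fixP|mov] := eqVneq (to P m) P.
  by rewrite -fixP; exact: (mem_setact ('P^*) m BP).
exfalso.
pose U := orbit to G P.
have UE : U \subset E by apply/subsetP => Q /imsetP[g Gg ->]; exact: toE.
have PU : P \in U := orbit_refl _ _ _.
have actsGU : [acts G, on U | to] := acts_orbit _ _ (subsetT G).
have actsMU : [acts M, on U | to] := subset_trans sMG actsGU.
have fful : [faithful M, on U | to].
  have nLG : G \subset 'N('C_M(U | to)) :=
    normsI (normal_norm nMG) (subset_trans actsGU (astab_norm _ _)).
  case/mingroupP: minM => _ minH.
  rewrite /faithful (subG1 [group of 'C_M(U | to)]); apply/negPn/negP => ntL.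
  have eqLM := minH [group of 'C_M(U | to)] (introT andP (conj ntL nLG)) (subsetIl _ _).
  have : m \in 'C_M(U | to) by rewrite eqLM.
  case/setIP => _ /astabP/(_ P PU) h.
  by rewrite h eqxx in mov.
have dvdMU : #|M| %| #|U|`!.
  have iso := faithful_isom actsMU fful.
  rewrite (isom_card iso) -(perm.card_Sym U).
  apply: cardSg; apply/subsetP => s /morphimP[a _ Ma ->].
  rewrite inE; apply/subsetP => x; rewrite inE actpermE /= /actby.
  by apply: contraR => xU; rewrite (negPf xU).
set k := #|P|.
have cardU Q : Q \in U -> #|Q| = k.
  by move=> /imsetP[g _ ->]; exact: card_setact.
have partP := partE P PE.
have [x0 Bx0] : exists x0, x0 \in B.
  apply/set0Pn; apply/eqP => B0.
  by case/and3P: partP => _ _; rewrite -B0 BP.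
have Mm' : m \in G := subsetP sMG m Mm.
have k2 : 1 < k.
  rewrite ltnNge; apply/negP => k1.
  have k1' : #|P| == 1%N.
    by rewrite eqn_leq k1 /=; apply/card_gt0P; exists B.
  have /cards1P[C PC] := k1'.
  have /cards1P[C' PC'] : #|to P m| == 1%N by rewrite card_setact.
  have cPm : is_partition (to P m) := partE _ (toE m P PE Mm').
  have cP := partP.
  rewrite PC' in cPm; rewrite PC in cP.
  case/and3P: cPm => /eqP + _ _; case/and3P: cP => /eqP + _ _.
  rewrite !cover1 => eC eC'.
  by move: mov; rewrite PC' PC eC eC' eqxx.
pose fx (x : T) : {ffun {set {set T}} -> {set T}} :=
  [ffun Q => if Q \in U then pblock Q x else set0].
pose S := fx @: [set: T].
have cardS : #|S| = (k ^ #|U|)%N.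
  have -> : #|S| = #|pfamily set0 U (fun Q : {set {set T}} => Q)|.
    apply: eq_card => f; apply/imsetP/pfamilyP.
    - case=> x _ ->; split.
        apply/subsetP => Q; rewrite inE ffunE; case: ifP => //.
        by rewrite eqxx.
      move=> Q QU; rewrite ffunE QU; apply: pblock_mem.
      by case/and3P: (partE Q (subsetP UE Q QU)) => /eqP -> _ _; rewrite inE.
    - case=> supp fam.
      pose g Q := if Q \in U then f Q else pblock Q x0.
      have gE Q : Q \in E -> g Q \in Q.
        move=> QE; rewrite /g; case: ifP => QU; first exact: fam.
        by apply: pblock_mem; case/and3P: (partE Q QE) => /eqP -> _ _; rewrite inE.
      have /card_gt0P[y /bigcapP yin] : 0 < #|\bigcap_(Q in E) g Q|.
        by rewrite (cartE g gE).
      exists y; rewrite ?inE //; apply/ffunP => Q; rewrite ffunE.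
      case: ifP => QU.
        have QE := subsetP UE Q QU; have := yin Q QE; rewrite /g QU => yf.
        case/and3P: (partE Q QE) => _ tQ _.
        by rewrite (def_pblock tQ (fam Q QU) yf).
      apply/eqP; apply: contraFT QU => nz; apply: (subsetP supp).
      by rewrite inE.
  rewrite card_pfamily (foldr_const k) ?size_image //.
  apply/allP => n /mapP[Q]; rewrite mem_enum => QU ->.
  by rewrite /= cardU.
have pbl g Q y : g \in M -> Q \in U ->
    pblock (to Q g) (g y) = ('P^*)%act (pblock Q y) g.
  move=> Mg QU; apply: pblock_act; first exact: partE (subsetP UE Q QU).
  apply: partE; apply: (subsetP UE).
  by rewrite (acts_act actsMU Mg).
have key g x y : g \in M -> (fx (g y) == fx (g x)) = (fx y == fx x).
  move=> Mg; apply/eqP/eqP => h; apply/ffunP => Q; rewrite !ffunE; case: ifP => // QU.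
    have QgU : to Q g \in U by rewrite (acts_act actsMU Mg).
    move/ffunP/(_ (to Q g)): h; rewrite /= !ffunE QgU !pbl //.
    exact: act_inj.
  have Mg' : (g^-1)%g \in M by rewrite groupV.
  have Q'U : to Q (g^-1)%g \in U by rewrite (acts_act actsMU Mg').
  have -> : Q = to (to Q (g^-1)%g) g by rewrite actKV.
  rewrite !pbl //.
  move/ffunP/(_ (to Q (g^-1)%g)): h; rewrite /= !ffunE Q'U => ->.
  by [].
pose cls x := [set y | fx y == fx x].
have clsM g x : g \in M -> ('P^*)%act (cls x) g = cls (g x).
  move=> Mg; apply/setP => z; apply/imsetP/idP.
    by case=> y; rewrite inE => /eqP hy ->; rewrite inE /= /aperm key // hy.
  rewrite inE => hz; exists ((g^-1)%g z); last by rewrite /= apermE permKV.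
  by rewrite inE -(key g) // permKV.
pose C := orbit ('P^*)%act M (cls x0).
have dvdC : #|C| %| #|M| by rewrite card_orbit; exact: dvdn_indexg.
have CE : C = cls @: [set: T].
  apply/setP => Z; apply/imsetP/imsetP.
    by case=> g Mg ->; exists (g x0); rewrite ?inE ?clsM.
  case=> y _ ->.
  have := in_setT y; rewrite -(atransP trM _ (in_setT x0)) => /imsetP[g Mg ->].
  by exists g => //; rewrite clsM.
pose h (s : {ffun {set {set T}} -> {set T}}) := [set y | fx y == s].
have CS : #|C| = #|S|.
  have -> : C = h @: S by rewrite CE /S -imset_comp.
  apply: card_in_imset => s1 s2 /imsetP[x1 _ ->] /imsetP[x2 _ ->] e.
  have : x1 \in h (fx x1) by rewrite inE.
  by rewrite e inE => /eqP.
have U0 : 0 < #|U| by apply/card_gt0P; exists P.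
have kM : (k ^ #|U|)%N %| #|M| by rewrite -cardS -CS.
have /negP := fact_bound _ _ (pdiv_prime k2) U0; apply.
have pk := dvdn_exp2r #|U| (pdiv_dvd k).
exact: (dvdn_trans (dvdn_trans pk kM) dvdMU).
Qed.
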